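(* Suppose $\{L_t : t\in[0,1]\}$ is a continuous family of oriented lines in $\mathbb{R}^3$ such that $L_1$ is the line $L_0$ with the opposite orientation. Then there exist parameters $r,s\in[0,1]$ such that $L_r$ and $L_s$ are perpendicular, intersecting lines.
   Context: An oriented line in $\mathbb{R}^3$ is a line together with a choice of one of its two unit direction vectors. Continuity of the family is understood in the space of oriented lines, e.g. via the direction vector $a_t$ and the moment vector $p_t\times a_t$ for any point $p_t\in L_t$ varying continuously in $t$. *)

(* Defs.v *)
From Stdlib Require Import Reals Lra.
Open Scope R_scope.

Definition vec : Type := (R * R * R)%type.
Definition vx (v : vec) : R := fst (fst v).
Definition vy (v : vec) : R := snd (fst v).
Definition vz (v : vec) : R := snd v.

Definition dot (u v : vec) : R := vx u * vx v + vy u * vy v + vz u * vz v.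
Definition cross (u v : vec) : vec :=
  ((vy u * vz v - vz u * vy v, vz u * vx v - vx u * vz v),
    vx u * vy v - vy u * vx v).
Definition vopp (v : vec) : vec := ((- vx v, - vy v), - vz v).

Definition continuous_on01 (f : R -> R) : Prop :=
  forall t, 0 <= t <= 1 -> forall eps, 0 < eps ->
    exists delta, 0 < delta /\
      forall u, 0 <= u <= 1 -> Rabs (u - t) < delta -> Rabs (f u - f t) < eps.

Definition vcontinuous_on01 (f : R -> vec) : Prop :=
  continuous_on01 (fun t => vx (f t)) /\
  continuous_on01 (fun t => vy (f t)) /\
  continuous_on01 (fun t => vz (f t)).

(* An oriented line in Pluecker coordinates: unit direction a and moment m
   with a.m = 0; the point set is { x | x * a = m } (m = p * a for any p on it). *)
Definition oriented_line (a m : vec) : Prop := dot a a = 1 /\ dot a m = 0.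
Definition on_line (a m : vec) (x : vec) : Prop := cross x a = m.

Definition line_family (a m : R -> vec) : Prop :=
  (forall t, 0 <= t <= 1 -> oriented_line (a t) (m t)) /\
  vcontinuous_on01 a /\ vcontinuous_on01 m.

(* Main.v *)
Require Import Defs.
From Stdlib Require Import Reals Lra Lia Nsatz Classical ClassicalEpsilon.
From Coquelicot Require Compactness.
Open Scope R_scope.


Definition d2 (u v : R*R) := fst u * fst v + snd u * snd v.
Definition c2 (u v : R*R) := fst u * snd v - snd u * fst v.
Definition ang (u v : R*R) := atan (c2 u v / d2 u v).

Lemma ang_opp u v : ang v u = - ang u v.
Proof.
  unfold ang. rewrite <- atan_opp. f_equal. unfold c2, d2.
  replace (fst v * fst u + snd v * snd u) with (fst u * fst v + snd u * snd v) by ring.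
  unfold Rdiv. ring.
Qed.

Lemma cos_pos_range z : - PI < z < PI -> 0 < cos z -> - (PI/2) < z < PI/2.
Proof.
  intros [H1 H2] Hc. split.
  - destruct (Rlt_or_le (-(PI/2)) z) as [h|h]; auto.
    assert (cos (-z) <= 0) by (apply cos_le_0; lra).
    rewrite cos_neg in H. lra.
  - destruct (Rlt_or_le z (PI/2)) as [h|h]; auto.
    assert (cos z <= 0) by (apply cos_le_0; lra). lra.
Qed.

Lemma ang_add u v w : d2 u v > 0 -> d2 v w > 0 -> d2 u w > 0 ->
  ang u v + ang v w = ang u w.
Proof.
  intros Huv Hvw Huw.
  set (x := c2 u v / d2 u v). set (y := c2 v w / d2 v w).
  assert (Hv : fst v * fst v + snd v * snd v > 0).
  { unfold d2 in Huv. destruct (Req_dec (fst v) 0) as [e|e].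
    - destruct (Req_dec (snd v) 0) as [e'|e'].
      + rewrite e, e' in Huv. lra.
      + assert (0 < snd v * snd v) by (apply Rsqr_pos_lt; auto). nra.
    - assert (0 < fst v * fst v) by (apply Rsqr_pos_lt; auto). nra. }
  assert (Id1 : d2 u v * d2 v w - c2 u v * c2 v w = (fst v * fst v + snd v * snd v) * d2 u w)
    by (unfold d2, c2; ring).
  assert (Id2 : c2 u v * d2 v w + c2 v w * d2 u v = (fst v * fst v + snd v * snd v) * c2 u w)
    by (unfold d2, c2; ring).
  assert (Hxy : 1 - x * y = (fst v * fst v + snd v * snd v) * d2 u w / (d2 u v * d2 v w)).
  { unfold x, y. rewrite <- Id1. field. lra. }
  assert (Hxy' : 0 < 1 - x * y).
  { rewrite Hxy. apply Rdiv_lt_0_compat; apply Rmult_lt_0_compat; lra. }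
  assert (Hq : (x + y) / (1 - x * y) = c2 u w / d2 u w).
  { rewrite Hxy. unfold x, y.
    assert (x + y = (fst v * fst v + snd v * snd v) * c2 u w / (d2 u v * d2 v w)).
    { unfold x, y. rewrite <- Id2. field. lra. }
    unfold x, y in H. rewrite H. field. repeat split; lra. }
  unfold ang. fold x y. rewrite <- Hq.
  assert (Sx : 0 < sqrt (1 + x²)) by (apply sqrt_lt_R0; pose proof (Rle_0_sqr x); lra).
  assert (Sy : 0 < sqrt (1 + y²)) by (apply sqrt_lt_R0; pose proof (Rle_0_sqr y); lra).
  assert (Hc : cos (atan x + atan y) = (1 - x * y) / (sqrt (1 + x²) * sqrt (1 + y²))).
  { rewrite cos_plus, !cos_atan, !sin_atan. field. lra. }
  assert (Hs : sin (atan x + atan y) = (x + y) / (sqrt (1 + x²) * sqrt (1 + y²))).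
  { rewrite sin_plus, !cos_atan, !sin_atan. field. lra. }
  assert (Hcp : 0 < cos (atan x + atan y)).
  { rewrite Hc. apply Rdiv_lt_0_compat; auto. apply Rmult_lt_0_compat; auto. }
  assert (Hr : - (PI/2) < atan x + atan y < PI/2).
  { apply cos_pos_range; auto. pose proof (atan_bound x). pose proof (atan_bound y). lra. }
  rewrite <- (atan_tan _ Hr). f_equal. unfold tan. rewrite Hc, Hs. field.
  repeat split; lra.
Qed.

Definition rot (th : R) (p : R*R) : R*R :=
  (fst p * cos th - snd p * sin th, fst p * sin th + snd p * cos th).

Lemma rot_add a b p : rot a (rot b p) = rot (a + b) p.
Proof. unfold rot; simpl. rewrite cos_plus, sin_plus. f_equal; ring. Qed.

Lemma ang_rot u v : d2 u v > 0 -> exists mu, mu > 0 /\ v = (mu * fst (rot (ang u v) u), mu * snd (rot (ang u v) u)).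
Proof.
  intros H. set (c := c2 u v). set (d := d2 u v).
  assert (Hd : d > 0) by exact H.
  assert (Hu : fst u * fst u + snd u * snd u > 0).
  { unfold d, d2 in H. destruct (Req_dec (fst u) 0) as [e|e].
    - destruct (Req_dec (snd u) 0) as [e'|e'].
      + rewrite e, e' in H. lra.
      + assert (0 < snd u * snd u) by (apply Rsqr_pos_lt; auto). nra.
    - assert (0 < fst u * fst u) by (apply Rsqr_pos_lt; auto). nra. }
  assert (Hs : 0 < sqrt (1 + (c/d)²)) by (apply sqrt_lt_R0; pose proof (Rle_0_sqr (c/d)); lra).
  exists (sqrt (1 + (c/d)²) * d / (fst u * fst u + snd u * snd u)). split.
  - apply Rdiv_lt_0_compat; [apply Rmult_lt_0_compat|]; lra.
  - unfold rot, ang. fold c d. rewrite cos_atan, sin_atan.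
    destruct v as [v1 v2]. simpl. f_equal.
    all: set (S := sqrt (1 + (c / d)²)) in *.
    all: unfold c, d, c2, d2 in *; simpl in *.
    all: field; split; lra.
Qed.


Fixpoint psum (f : nat -> R) (lo n : nat) : R :=
  match n with O => 0 | S n' => f lo + psum f (S lo) n' end.

Lemma psum_ext f g lo n : (forall j, (lo <= j < lo + n)%nat -> f j = g j) -> psum f lo n = psum g lo n.
Proof.
  revert lo; induction n; intros lo H; simpl; auto.
  rewrite (H lo) by lia. rewrite (IHn (S lo)); auto. intros; apply H; lia.
Qed.

Lemma psum_S f lo n : psum f lo (S n) = f lo + psum f (S lo) n.
Proof. reflexivity. Qed.

Lemma psum_last f n : forall lo, psum f lo (S n) = psum f lo n + f (lo + n)%nat.
Proof.
  induction n; intros lo.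
  - simpl. rewrite Nat.add_0_r. ring.
  - rewrite psum_S, IHn, psum_S. replace (S lo + n)%nat with (lo + S n)%nat by lia. ring.
Qed.

Definition sc (l : R) (p : R*R) : R*R := (l * fst p, l * snd p).

Lemma rot_sc th l p : rot th (sc l p) = sc l (rot th p).
Proof. unfold rot, sc; simpl; f_equal; ring. Qed.

Lemma path_rot (f : nat -> R*R) n : forall lo,
  (forall j, (lo <= j < lo + n)%nat -> d2 (f j) (f (S j)) > 0) ->
  exists lam, lam > 0 /\ f (lo + n)%nat = sc lam (rot (psum (fun j => ang (f j) (f (S j))) lo n) (f lo)).
Proof.
  induction n; intros lo H.
  - exists 1. split; [lra|]. rewrite Nat.add_0_r. simpl. unfold sc, rot. rewrite cos_0, sin_0.
    destruct (f lo); simpl; f_equal; ring.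
  - destruct (IHn (S lo)) as [lam [Hl E]]. { intros; apply H; lia. }
    destruct (ang_rot (f lo) (f (S lo))) as [mu [Hm E2]]. { apply H; lia. }
    exists (lam * mu). split; [nra|].
    replace (lo + S n)%nat with (S lo + n)%nat by lia. rewrite E. simpl psum.
    set (A0 := ang (f lo) (f (S lo))). set (P := psum _ (S lo) n).
    change (f (S lo) = sc mu (rot A0 (f lo))) in E2. rewrite E2.
    rewrite rot_sc, rot_add. unfold sc; simpl. rewrite (Rplus_comm P). f_equal; ring.
Qed.

Definition vneg (p : R*R) : R*R := (- fst p, - snd p).

Lemma ang_neg x y : ang (vneg x) (vneg y) = ang x y.
Proof. unfold ang, c2, d2, vneg; simpl. f_equal. f_equal; ring. Qed.

Section Grid.
Variable V : nat -> nat -> R*R.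
Variable N : nat.
Hypothesis Hclose : forall i j i' j', (i <= N)%nat -> (j <= N)%nat -> (i' <= N)%nat -> (j' <= N)%nat ->
  (i <= S i')%nat -> (i' <= S i)%nat -> (j <= S j')%nat -> (j' <= S j)%nat -> d2 (V i j) (V i' j') > 0.
Hypothesis Hdiag : forall i, (i <= N)%nat -> V i i = (1, 0).
Hypothesis Hanti : forall i, (i <= N)%nat -> V i N = vneg (V 0%nat i).

Let rowf i := fun j => ang (V i j) (V i (S j)).
Let c i j := ang (V i j) (V (S i) j).

Lemma square i j : (i < N)%nat -> (j < N)%nat ->
  rowf i j = c i j + rowf (S i) j - c i (S j).
Proof.
  intros. unfold rowf, c.
  rewrite <- (ang_add (V i j) (V (S i) (S j)) (V i (S j))) by (apply Hclose; lia).
  rewrite <- (ang_add (V i j) (V (S i) j) (V (S i) (S j))) by (apply Hclose; lia).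
  rewrite (ang_opp (V i (S j)) (V (S i) (S j))). ring.
Qed.

Lemma tele i : (S i <= N)%nat -> forall n lo, (S i <= lo)%nat -> (lo + n <= N)%nat ->
  psum (rowf i) lo n = c i lo - c i (lo + n) + psum (rowf (S i)) lo n.
Proof.
  intros Hi n. induction n; intros lo H1 H2; simpl.
  - rewrite Nat.add_0_r. ring.
  - rewrite IHn by lia. rewrite square by lia.
    replace (S lo + n)%nat with (lo + S n)%nat by lia. ring.
Qed.

Let row i := psum (rowf i) i (N - i).

Lemma row_step i : (i < N)%nat -> row i = row (S i) - c i N.
Proof.
  intros H. unfold row. replace (N - i)%nat with (S (N - S i)) by lia. simpl psum.
  rewrite tele by lia. replace (S i + (N - S i))%nat with N by lia.
  unfold rowf at 1, c at 1. rewrite (Hdiag i) by lia. rewrite <- (Hdiag (S i)) by lia.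
  rewrite ang_opp. ring.
Qed.

Lemma row_ind k : (k <= N)%nat -> row 0 = row k - psum (fun i => c i N) 0 k.
Proof.
  induction k; intros H.
  - simpl. ring.
  - rewrite IHk by lia. rewrite row_step by lia.
    rewrite psum_last. simpl. ring.
Qed.

Lemma grid_false : False.
Proof.
  assert (R0 : row 0 = - row 0).
  { assert (H1 := row_ind N (le_n N)).
    assert (HN : row N = 0) by (unfold row; rewrite Nat.sub_diag; reflexivity).
    assert (psum (fun i => c i N) 0 N = row 0).
    { unfold row. rewrite Nat.sub_0_r. apply psum_ext. intros j Hj. unfold c, rowf.
      rewrite !Hanti by lia. apply ang_neg. }
    lra. }
  assert (Z : row 0 = 0) by lra.
  destruct (path_rot (V 0%nat) N 0%nat) as [lam [Hl E]].
  { intros; apply Hclose; lia. }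
  simpl in E. unfold row, rowf in Z. rewrite Nat.sub_0_r in Z. rewrite Z in E.
  rewrite Hanti in E by lia. rewrite Hdiag in E by lia.
  unfold vneg, sc, rot in E; simpl in E. rewrite cos_0, sin_0 in E.
  injection E. intros. lra.
Qed.
End Grid.


Lemma pt_on (a m : vec) : dot a a = 1 -> dot a m = 0 -> cross (cross a m) a = m.
Proof.
  destruct a as [[a1 a2] a3], m as [[m1 m2] m3]. unfold dot, cross, vx, vy, vz; simpl.
  intros H1 H2. f_equal; [f_equal|]; nsatz.
Qed.

Lemma meet (a b m n : vec) : dot a a = 1 -> dot b b = 1 -> dot a m = 0 -> dot b n = 0 ->
  dot a b = 0 -> dot a n + dot b m = 0 -> exists x, cross x a = m /\ cross x b = n.
Proof.
  destruct a as [[a1 a2] a3], m as [[m1 m2] m3], b as [[b1 b2] b3], n as [[n1 n2] n3].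
  unfold dot, cross, vx, vy, vz; simpl. intros H1 H2 H3 H4 H5 H6.
  set (l := n1 * (a2 * b3 - a3 * b2) + n2 * (a3 * b1 - a1 * b3) + n3 * (a1 * b2 - a2 * b1)).
  exists ((a2 * m3 - a3 * m2 + l * a1, a3 * m1 - a1 * m3 + l * a2), a1 * m2 - a2 * m1 + l * a3).
  simpl. unfold l. split; (f_equal; [f_equal|]); nsatz.
Qed.


Definition cont2 (f : R -> R -> R) (u v : R) := forall eps, 0 < eps -> exists del, 0 < del /\
  forall p q, 0 <= p <= 1 -> 0 <= q <= 1 -> Rabs (p - u) < del -> Rabs (q - v) < del ->
  Rabs (f p q - f u v) < eps.

Lemma cont2_l (phi : R -> R) u v : continuous_on01 phi -> 0 <= u <= 1 -> cont2 (fun p q => phi p) u v.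
Proof.
  intros Hc Hu eps He. destruct (Hc u Hu eps He) as [d [Hd H]]. exists d. split; auto.
Qed.

Lemma cont2_r (phi : R -> R) u v : continuous_on01 phi -> 0 <= v <= 1 -> cont2 (fun p q => phi q) u v.
Proof.
  intros Hc Hu eps He. destruct (Hc v Hu eps He) as [d [Hd H]]. exists d. split; auto.
Qed.

Lemma cont2_plus f g u v : cont2 f u v -> cont2 g u v -> cont2 (fun p q => f p q + g p q) u v.
Proof.
  intros Hf Hg eps He.
  destruct (Hf (eps/2)) as [d1 [Hd1 H1]]; [lra|].
  destruct (Hg (eps/2)) as [d2 [Hd2 H2]]; [lra|].
  exists (Rmin d1 d2). split; [apply Rmin_pos; auto|].
  intros p q Hp Hq Hpu Hqv.
  assert (A1 := H1 p q Hp Hq (Rlt_le_trans _ _ _ Hpu (Rmin_l _ _)) (Rlt_le_trans _ _ _ Hqv (Rmin_l _ _))).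
  assert (A2 := H2 p q Hp Hq (Rlt_le_trans _ _ _ Hpu (Rmin_r _ _)) (Rlt_le_trans _ _ _ Hqv (Rmin_r _ _))).
  replace (f p q + g p q - (f u v + g u v)) with ((f p q - f u v) + (g p q - g u v)) by ring.
  eapply Rle_lt_trans; [apply Rabs_triang|]. lra.
Qed.

Lemma cont2_mult f g u v : cont2 f u v -> cont2 g u v -> cont2 (fun p q => f p q * g p q) u v.
Proof.
  intros Hf Hg eps He.
  set (K := Rabs (f u v) + Rabs (g u v) + 1).
  assert (HK : 1 <= K) by (unfold K; pose proof (Rabs_pos (f u v)); pose proof (Rabs_pos (g u v)); lra).
  set (eta := Rmin 1 (eps / (2 * K))).
  assert (Heta : 0 < eta) by (apply Rmin_pos; [lra| apply Rdiv_lt_0_compat; lra]).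
  assert (Heta1 : eta <= 1) by apply Rmin_l.
  assert (Heta2 : eta * (2 * K) <= eps).
  { assert (eta <= eps / (2*K)) by apply Rmin_r.
    apply (Rmult_le_compat_r (2*K)) in H; [|lra].
    replace (eps / (2*K) * (2*K)) with eps in H by (field; lra). lra. }
  destruct (Hf eta Heta) as [d1 [Hd1 H1]].
  destruct (Hg eta Heta) as [d2 [Hd2 H2]].
  exists (Rmin d1 d2). split; [apply Rmin_pos; auto|].
  intros p q Hp Hq Hpu Hqv.
  assert (A1 := H1 p q Hp Hq (Rlt_le_trans _ _ _ Hpu (Rmin_l _ _)) (Rlt_le_trans _ _ _ Hqv (Rmin_l _ _))).
  assert (A2 := H2 p q Hp Hq (Rlt_le_trans _ _ _ Hpu (Rmin_r _ _)) (Rlt_le_trans _ _ _ Hqv (Rmin_r _ _))).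
  set (e1 := f p q - f u v) in *. set (e2 := g p q - g u v) in *.
  replace (f p q * g p q - f u v * g u v) with (e1 * e2 + e1 * g u v + f u v * e2) by (unfold e1, e2; ring).
  eapply Rle_lt_trans; [apply Rabs_triang|].
  eapply Rle_lt_trans; [apply Rplus_le_compat_r; apply Rabs_triang|].
  rewrite !Rabs_mult.
  pose proof (Rabs_pos e1). pose proof (Rabs_pos e2).
  pose proof (Rabs_pos (f u v)). pose proof (Rabs_pos (g u v)).
  assert (Rabs e1 * Rabs e2 <= eta * 1) by (apply Rmult_le_compat; lra).
  assert (Rabs e1 * Rabs (g u v) <= eta * Rabs (g u v)) by (apply Rmult_le_compat_r; lra).
  assert (Rabs (f u v) * Rabs e2 <= Rabs (f u v) * eta) by (apply Rmult_le_compat_l; lra).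
  unfold K in Heta2. lra.
Qed.

Lemma close_pos c1 c2 p1 p2 q1 q2 eta :
  0 < c1 * c1 + c2 * c2 -> eta <= 1 -> eta <= (c1 * c1 + c2 * c2) / 32 ->
  Rabs (p1 - c1) < eta -> Rabs (p2 - c2) < eta -> Rabs (q1 - c1) < eta -> Rabs (q2 - c2) < eta ->
  p1 * q1 + p2 * q2 > 0.
Proof.
  intros Hr H1 H2 A B C D.
  set (rho := c1 * c1 + c2 * c2) in *.
  assert (Sq : forall x, Rabs x < eta -> x * x < rho / 32).
  { intros x Hx. pose proof (Rabs_pos x).
    assert (x * x = Rabs x * Rabs x) by (unfold Rabs; destruct (Rcase_abs x); ring).
    rewrite H0. assert (Rabs x * Rabs x <= Rabs x * 1) by (apply Rmult_le_compat_l; lra).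
    assert (Rabs x * 1 <= eta) by lra. nra. }
  set (e1 := p1 - c1) in *. set (e2 := p2 - c2) in *. set (f1 := q1 - c1) in *. set (f2 := q2 - c2) in *.
  apply Sq in A. apply Sq in B. apply Sq in C. apply Sq in D.
  replace (p1 * q1 + p2 * q2) with (rho + (c1*e1 + c2*e2) + (c1*f1 + c2*f2) + (e1*f1 + e2*f2))
    by (unfold rho, e1, e2, f1, f2; ring).
  assert (0 <= (c1/2 + 2*e1)^2 + (c2/2 + 2*e2)^2) by (apply Rplus_le_le_0_compat; apply pow2_ge_0).
  assert (0 <= (c1/2 + 2*f1)^2 + (c2/2 + 2*f2)^2) by (apply Rplus_le_le_0_compat; apply pow2_ge_0).
  assert (0 <= (e1 + f1)^2 + (e2 + f2)^2) by (apply Rplus_le_le_0_compat; apply pow2_ge_0).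
  unfold rho in *. nra.
Qed.


Lemma unif (G H : R -> R -> R) :
 (forall u v, 0<=u<=1 -> 0<=v<=1 -> cont2 G u v /\ cont2 H u v) ->
 (forall u v, 0<=u<=1 -> 0<=v<=1 -> 0 < G u v * G u v + H u v * H u v) ->
 exists d, 0 < d /\ forall x y x' y', 0<=x<=1 -> 0<=y<=1 -> 0<=x'<=1 -> 0<=y'<=1 ->
   Rabs (x - x') < d -> Rabs (y - y') < d ->
   G x y * G x' y' + H x y * H x' y' > 0.
Proof.
  intros Hc Hp.
  set (eta := fun u v => Rmin 1 ((G u v * G u v + H u v * H u v) / 32)).
  assert (Ex : forall u v, {del : posreal | 0<=u<=1 -> 0<=v<=1 -> forall p q, 0<=p<=1 -> 0<=q<=1 ->
     Rabs (p-u) < 2*del -> Rabs (q-v) < 2*del ->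
     Rabs (G p q - G u v) < eta u v /\ Rabs (H p q - H u v) < eta u v}).
  { intros u v. apply constructive_indefinite_description.
    destruct (classic (0<=u<=1 /\ 0<=v<=1)) as [[Hu Hv]|Hn].
    - assert (He : 0 < eta u v).
      { unfold eta. apply Rmin_pos; [lra|]. specialize (Hp u v Hu Hv). lra. }
      destruct (Hc u v Hu Hv) as [HG HH].
      destruct (HG _ He) as [d1 [Hd1 H1]]. destruct (HH _ He) as [d2 [Hd2 H2]].
      assert (Hpos : 0 < Rmin d1 d2 / 2) by (apply Rdiv_lt_0_compat; [apply Rmin_pos|]; lra).
      exists (mkposreal _ Hpos). simpl. intros _ _ p q Hp' Hq' A B.
      split.
      + apply H1; auto.
        * pose proof (Rmin_l d1 d2). lra.
        * pose proof (Rmin_l d1 d2). lra.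
      + apply H2; auto.
        * pose proof (Rmin_r d1 d2). lra.
        * pose proof (Rmin_r d1 d2). lra.
    - exists (mkposreal 1 Rlt_0_1). intros Hu Hv. exfalso. tauto. }
  set (delta := fun u v => proj1_sig (Ex u v)).
  destruct (Coquelicot.Compactness.compactness_value_2d 0 1 0 1 delta) as [d Hd].
  exists d. split; [apply cond_pos|].
  intros x y x' y' Hx Hy Hx' Hy' Dx Dy.
  specialize (Hd x y Hx Hy).
  apply NNPP; intro Hneg; apply Hd; intros [u [v [Hu [Hv [Hxu [Hyv Hdle]]]]]]. apply Hneg.
  assert (P := proj2_sig (Ex u v) Hu Hv). fold (delta u v) in P.
  assert (DP := cond_pos (delta u v)).
  set (D := pos (delta u v)) in *.
  assert (Hx'u : Rabs (x' - u) < 2 * D).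
  { replace (x' - u) with ((x' - x) + (x - u)) by ring.
    eapply Rle_lt_trans; [apply Rabs_triang|]. rewrite Rabs_minus_sym. lra. }
  assert (Hy'v : Rabs (y' - v) < 2 * D).
  { replace (y' - v) with ((y' - y) + (y - v)) by ring.
    eapply Rle_lt_trans; [apply Rabs_triang|]. rewrite Rabs_minus_sym. lra. }
  destruct (P x y Hx Hy) as [A1 A2]; try lra.
  destruct (P x' y' Hx' Hy' Hx'u Hy'v) as [B1 B2].
  exact (close_pos (G u v) (H u v) _ _ _ _ (eta u v) (Hp u v Hu Hv) (Rmin_l _ _) (Rmin_r _ _) A1 A2 B1 B2).
Qed.


Lemma cross_vopp x y : cross x (vopp y) = vopp (cross x y).
Proof. destruct x as [[? ?] ?], y as [[? ?] ?]. unfold cross, vopp, vx, vy, vz; simpl. f_equal; [f_equal|]; ring. Qed.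

Lemma tdiff i i' : (i <= S i')%nat -> (i' <= S i)%nat -> Rabs (INR i - INR i') <= 1.
Proof.
  intros H1 H2. assert (i = i' \/ i = S i' \/ i' = S i)%nat as [E|[E|E]] by lia; subst.
  all: try rewrite S_INR; unfold Rabs; destruct (Rcase_abs _); lra.
Qed.

Theorem lemma3p1 (a m : R -> vec) :
  line_family a m ->
  a 1 = vopp (a 0) ->
  (forall x : vec, on_line (a 1) (m 1) x <-> on_line (a 0) (m 0) x) ->
  exists r s : R, 0 <= r <= 1 /\ 0 <= s <= 1 /\
    dot (a r) (a s) = 0 /\
    (exists x : vec, on_line (a r) (m r) x /\ on_line (a s) (m s) x).
Proof.
  intros [Hor [Hca Hcm]] Ha1 Hl.
  assert (H01 : 0 <= 0 <= 1) by lra. assert (H11 : 0 <= 1 <= 1) by lra.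
  assert (Hm1 : m 1 = vopp (m 0)).
  { destruct (Hor 0 H01) as [u1 u2].
    assert (on0 : on_line (a 0) (m 0) (cross (a 0) (m 0))) by (apply pt_on; auto).
    apply Hl in on0. unfold on_line in *. rewrite Ha1, cross_vopp in on0.
    rewrite <- on0. f_equal. apply pt_on; auto. }
  set (Gf := fun p q => dot (a p) (a q)).
  set (Hf := fun p q => dot (a p) (m q) + dot (a q) (m p)).
  apply NNPP; intro Hno.
  assert (Hnz : forall u v, 0<=u<=1 -> 0<=v<=1 -> 0 < Gf u v * Gf u v + Hf u v * Hf u v).
  { intros u v Hu Hv. destruct (Rle_lt_dec (Gf u v * Gf u v + Hf u v * Hf u v) 0) as [Hle|]; auto.
    exfalso. assert (Gf u v = 0) by nra. assert (Hf u v = 0) by nra.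
    destruct (Hor u Hu) as [A1 A2]. destruct (Hor v Hv) as [B1 B2].
    destruct (meet (a u) (a v) (m u) (m v)) as [x [X1 X2]]; auto.
    apply Hno. exists u, v. repeat split; try lra. exact H. exists x; split; assumption. }
  destruct Hca as [ax [ay az]]. destruct Hcm as [mx [my mz]].
  assert (Hc : forall u v, 0<=u<=1 -> 0<=v<=1 -> cont2 Gf u v /\ cont2 Hf u v).
  { intros u v Hu Hv. unfold Gf, Hf, dot. split;
    repeat (apply cont2_plus || apply cont2_mult || (apply cont2_l; [assumption|assumption]) || (apply cont2_r; [assumption|assumption])). }
  destruct (unif Gf Hf Hc Hnz) as [d [Hd Hu]].
  destruct (INR_unbounded (1/d)) as [N HN].
  assert (HN0 : 0 < INR N) by (assert (0 < 1/d) by (apply Rdiv_lt_0_compat; lra); lra).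
  assert (HNd : 1 / INR N < d).
  { apply (Rmult_lt_reg_r (INR N)); auto. replace (1 / INR N * INR N) with 1 by (field; lra).
    apply (Rmult_lt_compat_r d) in HN; auto. replace (1/d*d) with 1 in HN by (field; lra). lra. }
  set (t := fun i => INR i / INR N).
  assert (Ht : forall i, (i <= N)%nat -> 0 <= t i <= 1).
  { intros i Hi. unfold t. split.
    - apply Rmult_le_pos; [apply pos_INR|apply Rlt_le, Rinv_0_lt_compat; lra].
    - apply le_INR in Hi. apply (Rmult_le_reg_r (INR N)); auto.
      replace (INR i / INR N * INR N) with (INR i) by (field; lra). lra. }
  assert (Htd : forall i i', (i <= S i')%nat -> (i' <= S i)%nat -> Rabs (t i - t i') < d).
  { intros i i' H1 H2. unfold t. replace (INR i / INR N - INR i' / INR N) with ((INR i - INR i') * (1 / INR N)) by (field; lra).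
    rewrite Rabs_mult. rewrite (Rabs_right (1 / INR N)) by (apply Rle_ge, Rlt_le, Rdiv_lt_0_compat; lra).
    pose proof (tdiff i i' H1 H2). pose proof (Rabs_pos (INR i - INR i')).
    assert (0 < 1 / INR N) by (apply Rdiv_lt_0_compat; lra). nra. }
  apply (grid_false (fun i j => (Gf (t i) (t j), Hf (t i) (t j))) N).
  - intros i j i' j' Hi Hj Hi' Hj' A1 A2 B1 B2. unfold d2; simpl.
    apply Hu; auto.
  - intros i Hi. destruct (Hor (t i) (Ht i Hi)) as [E1 E2]. unfold Gf, Hf. rewrite E1, E2.
    f_equal. ring.
  - intros i Hi. assert (tN : t N = 1) by (unfold t; field; lra).
    assert (t0 : t 0%nat = 0) by (unfold t; simpl; field; lra).
    rewrite tN, t0. unfold vneg, Gf, Hf. simpl. rewrite Ha1, Hm1. unfold dot, vopp, vx, vy, vz; simpl.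
    f_equal; ring.
Qed.
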